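(* Let $\theta$ be a homogeneous polynomial of degree $m\ge 1$ on $\mathbb C^N$ with coefficients in $[\mathcal U,\mathcal Y]$, not identically zero. Then there exist separable Hilbert spaces $\mathcal Y^{(0)}=\mathcal Y,\mathcal Y^{(1)},\dots,\mathcal Y^{(m)}=\mathcal U$ and operators $L^{(j)}_k\in[\mathcal Y^{(j)},\mathcal Y^{(j-1)}]$ ($j=1,\dots,m$, $k=1,\dots,N$) such that $\theta(z)=z\mathbf L^{(1)}\cdots z\mathbf L^{(m)}$ for all $z\in\mathbb C^N$. Moreover, if $m>1$ and $\alpha=(N;\mathbf A,\mathbf B,\mathbf C,\mathbf D;\mathcal X,\mathcal U,\mathcal Y)$ is any $N$-parametric system whose transfer function coincides with $\theta$ on a neighbourhood of $0$, then $\theta(z)=z\mathbf C\,(z\mathbf A)^{m-2}\,z\mathbf B$ for all $z\in\mathbb C^N$.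
   Context: For an $N$-tuple $\mathbf T=(T_1,\dots,T_N)$ of operators and $z\in\mathbb C^N$, $z\mathbf T:=\sum_k z_kT_k$. An $N$-parametric system $\alpha=(N;\mathbf A,\mathbf B,\mathbf C,\mathbf D;\mathcal X,\mathcal U,\mathcal Y)$ consists of separable Hilbert spaces $\mathcal X$ (state space), $\mathcal U$ (input space), $\mathcal Y$ (output space) and $N$-tuples of bounded operators $A_k\in[\mathcal X,\mathcal X]$, $B_k\in[\mathcal U,\mathcal X]$, $C_k\in[\mathcal X,\mathcal Y]$, $D_k\in[\mathcal U,\mathcal Y]$, $k=1,\dots,N$. Its transfer function is $\theta_\alpha(z)=z\mathbf D+z\mathbf C(I_{\mathcal X}-z\mathbf A)^{-1}z\mathbf B$, holomorphic on a neighbourhood of $z=0$. *)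

(* Defs.v *)
From HB Require Import structures.
From mathcomp Require Import all_boot all_order all_algebra.
From mathcomp Require Import all_classical all_reals all_analysis.
From mathcomp Require Import complex.
Set Implicit Arguments. Unset Strict Implicit. Unset Printing Implicit Defensive.
Import Order.TTheory GRing.Theory Num.Theory.
Import numFieldNormedType.Exports.
Local Open Scope classical_set_scope.
Local Open Scope ring_scope.

Definition CC (R : realType) : numFieldType := R[i].

Record hilbert (R : realType) := Hilbert {
  hcarrier :> normedModType (CC R);
  hinner : hcarrier -> hcarrier -> CC R;
  hinner_linl : forall (a : CC R) (x y z : hcarrier),
      hinner (a *: x + y) z = a * hinner x z + hinner y z;
  hinner_sym : forall x y : hcarrier, hinner y x = Num.conj (hinner x y);
  hnorm_inner : forall x : hcarrier, `|x| ^+ 2 = hinner x x;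
  hcomplete : forall F : set_system hcarrier, ProperFilter F -> cauchy F -> cvg F;
  hseparable : exists f : nat -> hcarrier, dense (range f)
}.

(* Bounded (= continuous) linear operators in [X, Y]. *)
Definition is_bop (R : realType) (X Y : hilbert R) (T : X -> Y) : Prop :=
  (forall (a : CC R) (x y : X), T (a *: x + y) = a *: T x + T y) /\ continuous T.

Definition zop (R : realType) (N : nat) (X Y : hilbert R)
  (z : 'rV[CC R]_N) (T : 'I_N -> X -> Y) : X -> Y :=
  fun x => \sum_(k < N) z ord0 k *: T k x.

Definition hpoly (R : realType) (N m : nat) (U Y : hilbert R)
  (c : {ffun 'I_N -> 'I_m.+1} -> U -> Y) (z : 'rV[CC R]_N) : U -> Y :=
  fun u => \sum_(a : {ffun 'I_N -> 'I_m.+1} | (\sum_(k < N) (a k : nat))%N == m)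
             (\prod_(k < N) z ord0 k ^+ a k) *: c a u.

(* F z = z L^(1) z L^(2) ... z L^(n) with L^(j)_k in [Y^(j), Y^(j-1)],
   Y^(0) = X, Y^(n) = U, intermediate spaces separable Hilbert spaces. *)
Inductive factorization (R : realType) (N : nat) (U : hilbert R) :
  forall (X : hilbert R), nat -> ('rV[CC R]_N -> U -> X) -> Prop :=
| fact1 (X : hilbert R) (L : 'I_N -> U -> X) :
    (forall k, is_bop (L k)) -> @factorization R N U X 1 (fun z => zop z L)
| factS (X W : hilbert R) (n : nat) (L : 'I_N -> W -> X) (F : 'rV[CC R]_N -> U -> W) :
    (forall k, is_bop (L k)) -> @factorization R N U W n F ->
    @factorization R N U X n.+1 (fun z u => zop z L (F z u)).

(* The transfer function of the N-parametric system (A,B,C,D) coincides with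
   theta on a neighbourhood of 0:
   theta(z) = zD + zC (I - zA)^{-1} zB, i.e. for every u and the solution x of
   (I - zA) x = zB u one has theta(z) u = zD u + zC x (and I - zA is bijective). *)
Definition transfer_eq_near0 (R : realType) (N : nat) (X U Y : hilbert R)
  (A : 'I_N -> X -> X) (B : 'I_N -> U -> X) (C : 'I_N -> X -> Y) (D : 'I_N -> U -> Y)
  (theta : 'rV[CC R]_N -> U -> Y) : Prop :=
  \forall z \near (0 : 'rV[CC R]_N),
     bijective (fun x : X => x - zop z A x) /\
     forall (u : U) (x : X), x - zop z A x = zop z B u ->
       theta z u = zop z D u + zop z C x.

(* Main.v *)
Require Import Defs.
From HB Require Import structures.
From mathcomp Require Import all_boot all_order all_algebra.
From mathcomp Require Import all_classical all_reals all_analysis.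
From mathcomp Require Import complex.
From mathcomp Require Import ring lra.
Import Order.TTheory GRing.Theory Num.Theory.
Import numFieldNormedType.Exports.
Set Implicit Arguments. Unset Strict Implicit. Unset Printing Implicit Defensive.
Local Open Scope classical_set_scope.
Local Open Scope ring_scope.
Section Real.
Variables (R : realType) (I : finType).
Implicit Types (b c : I -> R).

Lemma sqsum_le (s : seq I) b : (forall i, 0 <= b i) ->
  \sum_(i <- s) b i ^+ 2 <= (\sum_(i <- s) b i) ^+ 2.
Proof.
move=> b0; elim: s => [|a s IH]; first by rewrite !big_nil expr0n.
rewrite !big_cons.
have S0 : 0 <= \sum_(i <- s) b i by apply: sumr_ge0.
have := b0 a; nra.
Qed.

Lemma cauchy_schwarz b c :
  (\sum_i b i * c i) ^+ 2 <= (\sum_i b i ^+ 2) * (\sum_i c i ^+ 2).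
Proof.
set B := \sum_i b i ^+ 2; set C := \sum_i c i ^+ 2; set D := \sum_i b i * c i.
have B0 : 0 <= B by apply: sumr_ge0 => i _; exact: sqr_ge0.
have C0 : 0 <= C by apply: sumr_ge0 => i _; exact: sqr_ge0.
have key : 0 <= B * (B * C - D ^+ 2).
  have -> : B * (B * C - D ^+ 2) = \sum_i (B * c i - D * b i) ^+ 2.
    transitivity (\sum_i (B ^+ 2 * c i ^+ 2 - (2 * B * D) * (b i * c i) + D ^+ 2 * b i ^+ 2)).
      rewrite big_split /= sumrB -!mulr_sumr -/B -/C -/D; ring.
    by apply: eq_bigr => i _; ring.
  by apply: sumr_ge0 => i _; exact: sqr_ge0.
have [B00|Bp] := eqVneq B 0.
  have bz : forall i, b i = 0.
    move=> i; apply/eqP; rewrite -sqrf_eq0; apply/eqP.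
    move/eqP: B00; rewrite psumr_eq0 => [/allP H|i' _]; last exact: sqr_ge0.
    by apply/eqP; apply: H; rewrite mem_index_enum.
  rewrite /D big1 ?expr0n ?mulr0n //=; first by rewrite B00 mul0r.
  by move=> i _; rewrite bz mul0r.
have Bpos : 0 < B by rewrite lt_def Bp B0.
rewrite -subr_ge0; move: key; rewrite pmulr_rge0 //.
Qed.

Lemma minkowski a b c : (forall i, 0 <= a i) -> (forall i, 0 <= b i) -> (forall i, 0 <= c i) ->
  (forall i, a i <= b i + c i) ->
  Num.sqrt (\sum_i a i ^+ 2) <= Num.sqrt (\sum_i b i ^+ 2) + Num.sqrt (\sum_i c i ^+ 2).
Proof.
move=> a0 b0 c0 abc.
apply: (@le_trans _ _ (Num.sqrt (\sum_i (b i + c i) ^+ 2))).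
  rewrite ler_sqrt; last by apply: sumr_ge0 => i _; exact: sqr_ge0.
  apply: ler_sum => i _; have := abc i; have := a0 i; nra.
set B := \sum_i b i ^+ 2; set C := \sum_i c i ^+ 2; set D := \sum_i b i * c i.
have B0 : 0 <= B by apply: sumr_ge0 => i _; exact: sqr_ge0.
have C0 : 0 <= C by apply: sumr_ge0 => i _; exact: sqr_ge0.
have D0 : 0 <= D by apply: sumr_ge0 => i _; apply: mulr_ge0.
have cs := cauchy_schwarz b c; rewrite -/B -/C -/D in cs.
have E : \sum_i (b i + c i) ^+ 2 = B + 2 * D + C.
  rewrite /B /C /D mulr_sumr -!big_split /=; apply: eq_bigr => i _; ring.
rewrite E.
have sB := sqrtr_ge0 B; have sC := sqrtr_ge0 C.
rewrite -(ger0_norm (addr_ge0 sB sC)) -sqrtr_sqr ler_sqrt; last first.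
  by rewrite sqr_ge0.
have hB := sqr_sqrtr B0; have hC := sqr_sqrtr C0.
have hD : D <= Num.sqrt B * Num.sqrt C.
  rewrite -sqrtrM // -(ger0_norm D0) -sqrtr_sqr ler_sqrt //.
  by apply: mulr_ge0.
nra.
Qed.
End Real.
Section RN.
Variables (R : realType) (V : normedModType (CC R)).
Definition rn (v : V) : R := complex.Re `|v|.
Lemma rnE v : `|v| = (rn v)%:C%C.
Proof. by rewrite /rn RRe_real. Qed.
Lemma rn_ge0 v : 0 <= rn v.
Proof. by rewrite -lecR -rnE normr_ge0. Qed.
Lemma rnD v w : rn (v + w) <= rn v + rn w.
Proof. by have := ler_normD v w; rewrite !rnE -rmorphD lecR. Qed.
Lemma rnN v : rn (- v) = rn v.
Proof. by rewrite /rn normrN. Qed.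
Lemma rnB v w : rn (v - w) = rn (w - v).
Proof. by rewrite /rn distrC. Qed.
Lemma rn0 : rn 0 = 0.
Proof. by rewrite /rn normr0. Qed.
Lemma rn_eq0 v : rn v = 0 -> v = 0.
Proof. by move=> h; apply/eqP; rewrite -normr_eq0 rnE h. Qed.
Lemma rnZ (a : CC R) v : rn (a *: v) = complex.Re `|a| * rn v.
Proof.
rewrite /rn normrZ.
have -> : `|a| = (complex.Re `|a|)%:C%C by rewrite RRe_real.
by rewrite [`|v|]rnE -rmorphM.
Qed.
Lemma normc_real (r : R) : complex.Re `|(r%:C)%C : CC R| = `|r|.
Proof.
rewrite normc_def /= expr0n /= addr0 sqrtr_sqr //.
Qed.
Lemma rn_lt (v : V) (e : CC R) : 0 < e -> (`|v| < e) = (rn v < complex.Re e).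
Proof.
move=> e0; have -> : e = (complex.Re e)%:C%C by rewrite RRe_real // gtr0_real.
by rewrite rnE ltcR /=.
Qed.
End RN.
Section Prod.
Variables (R : realType) (H : hilbert R) (n : nat).
Definition pH := {ffun 'I_n -> H}.
HB.instance Definition _ := GRing.Lmodule.on pH.

Definition pS (x : pH) : R := \sum_i rn (x i) ^+ 2.
Definition pnrm (x : pH) : CC R := (Num.sqrt (pS x))%:C%C.

Lemma pS_ge0 x : 0 <= pS x.
Proof. by apply: sumr_ge0 => i _; exact: sqr_ge0. Qed.

Lemma pnrm_triangle x y : pnrm (x + y) <= pnrm x + pnrm y.
Proof.
rewrite /pnrm -rmorphD lecR; apply: minkowski => i; rewrite ?rn_ge0 //.
by rewrite ffunE rnD.
Qed.

Lemma pnrmZ (l : CC R) x : pnrm (l *: x) = `|l| * pnrm x.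
Proof.
rewrite /pnrm /pS.
have -> : `|l| = (complex.Re `|l|)%:C%C by rewrite RRe_real.
rewrite -(@rmorphM _ _ (real_complex R)); congr (_%:C%C).
have l0 : 0 <= complex.Re `|l| by rewrite -ler0c RRe_real.
under eq_bigr => i _ do rewrite ffunE rnZ exprMn.
by rewrite -mulr_sumr sqrtrM ?sqr_ge0 // sqrtr_sqr ger0_norm.
Qed.

Lemma pnrm_eq0 x : pnrm x = 0 -> x = 0.
Proof.
rewrite /pnrm => /(congr1 (@complex.Re R)) /= /eqP.
rewrite sqrtr_eq0 => S0.
have S00 : pS x = 0 by apply/eqP; rewrite eq_le S0 pS_ge0.
apply/ffunP => i; rewrite ffunE; apply: rn_eq0.
move/eqP: S00; rewrite /pS psumr_eq0 => [/allP Hx|j _]; last exact: sqr_ge0.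
by apply/eqP; rewrite -sqrf_eq0; apply: Hx; rewrite mem_index_enum.
Qed.

HB.instance Definition _ := Lmodule_isNormed.Build (CC R) pH
  pnrm_triangle pnrmZ pnrm_eq0.

Lemma pnormE (x : pH) : `|x| = pnrm x.
Proof. by []. Qed.
End Prod.
Section Prod2.
Variables (R : realType) (H : hilbert R) (n : nat).
Local Notation P := (pH H n).

Lemma rn_pH (x : P) : rn x = Num.sqrt (pS x).
Proof. by []. Qed.

Lemma rn_proj (x : P) k : rn (x k) <= rn x.
Proof.
rewrite rn_pH -(ger0_norm (rn_ge0 (x k))) -sqrtr_sqr ler_sqrt ?pS_ge0 //.
rewrite /pS (bigD1 k) //= lerDl; apply: sumr_ge0 => i _; exact: sqr_ge0.
Qed.

Lemma rn_sum (x : P) : rn x <= \sum_k rn (x k).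
Proof.
have S0 : 0 <= \sum_k rn (x k) by apply: sumr_ge0 => i _; exact: rn_ge0.
rewrite rn_pH -(ger0_norm S0) -sqrtr_sqr ler_sqrt; last exact: sqr_ge0.
by apply: sqsum_le => i; exact: rn_ge0.
Qed.

Lemma rn_small (x : P) (e : R) : 0 < e -> (forall k, rn (x k) < e / n.+1%:R) -> rn x < e.
Proof.
move=> e0 hk; apply: (le_lt_trans (rn_sum x)).
apply: (@le_lt_trans _ _ (\sum_(k < n) (e / n.+1%:R))).
  by apply: ler_sum => k _; apply: ltW.
rewrite sumr_const card_ord -[_ *+ n]mulr_natr.
have h1 : (n%:R : R) < n.+1%:R by rewrite ltr_nat.
have h2 : (0:R) < n.+1%:R by rewrite ltr0n.
by rewrite mulrAC ltr_pdivrMr // (ltr_pM2l e0).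
Qed.

Definition pip (x y : P) : CC R := \sum_i hinner (x i) (y i).

Lemma pip_linl (a : CC R) (x y z : P) : pip (a *: x + y) z = a * pip x z + pip y z.
Proof.
rewrite /pip mulr_sumr -big_split /=; apply: eq_bigr => i _.
by rewrite !ffunE hinner_linl.
Qed.

Lemma pip_sym (x y : P) : pip y x = Num.conj (pip x y).
Proof.
rewrite /pip rmorph_sum; apply: eq_bigr => i _; exact: hinner_sym.
Qed.

Lemma pip_norm (x : P) : `|x| ^+ 2 = pip x x.
Proof.
rewrite pnormE /pnrm -rmorphXn sqr_sqrtr ?pS_ge0 // /pS rmorph_sum /pip.
apply: eq_bigr => i _; by rewrite -hnorm_inner (rnE (x i)) -rmorphXn.
Qed.

Lemma pH_complete (F : set_system P) : ProperFilter F -> cauchy F -> cvg F.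
Proof.
move=> PF cF.
have cK : forall k, cvg ((fun x : P => x k) @ F).
  move=> k; apply: hcomplete; apply/cauchy_exP => e e0.
  have [x0 Fx0] := (proj1 (cauchyP F) cF) e e0.
  exists (x0 k); rewrite /nbhs /=; apply: (filterS _ Fx0) => y; rewrite -!ball_normE /= => hy.
  rewrite (rn_lt _ e0) in hy; rewrite (rn_lt (x0 k - y k) e0); apply: le_lt_trans hy.
  have -> : x0 k - y k = (x0 - y) k by rewrite !ffunE.
  exact: rn_proj.
set l : P := [ffun k => lim ((fun x : P => x k) @ F)].
apply: (@cvgP _ _ l); apply/fcvgrPdist_lt => e e0.
have eR : 0 < complex.Re e by rewrite -ltcR RRe_real // gtr0_real.
have e'0 : 0 < complex.Re e / n.+1%:R by rewrite divr_gt0 // ltr0n.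
have hk : forall k, \forall y \near F, rn (l k - (y : P) k) < complex.Re e / n.+1%:R.
  move=> k; have := cK k; move/cvgrPdist_lt.
  have e'C : (0 : CC R) < ((complex.Re e / n.+1%:R)%:C)%C by rewrite ltcR.
  move=> /(_ _ e'C); apply: filterS => y.
  by rewrite (rn_lt _ e'C) ffunE.
have hall := @filter_forall P _ (fun k (y : P) => rn (l k - y k) < complex.Re e / n.+1%:R) F _ hk.
have FF : Filter F by exact: PF.
have {}hall := hall FF.
apply: (filterS _ hall) => y hy.
rewrite (rn_lt _ e0); apply: rn_small => // k.
have -> : (l - y) k = l k - y k by rewrite !ffunE.
exact: hy.
Qed.

End Prod2.
Section Prod3.
Variables (R : realType) (H : hilbert R) (n : nat).
Local Notation P := (pH H n).

Lemma dense_approx (f : nat -> H) : dense (range f) ->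
  forall (v : H) (e : CC R), 0 < e -> exists j, `|v - f j| < e.
Proof.
move=> d v e e0.
have [y [hy [j _ fj]]] := d (ball v e) (ex_intro _ v (ballxx v e0)) (ball_open v e).
by exists j; rewrite fj; move: hy; rewrite -ball_normE.
Qed.

Lemma pH_separable : exists g : nat -> P, dense (range g).
Proof.
have [f df] := hseparable H.
pose g j : P := [ffun k : 'I_n => f (nth 0%N (CodeSeq.decode j) k)].
exists g => O [x Ox] oO.
have : nbhs x O by rewrite openE in oO; exact: oO Ox.
move/nbhs_normP => [e /= e0 He].
have eR : 0 < complex.Re e by rewrite -ltcR RRe_real // gtr0_real.
have e'C : (0 : CC R) < ((complex.Re e / n.+1%:R)%:C)%C.
  by rewrite ltcR divr_gt0 // ltr0n.
have : forall k, exists j, `|x k - f j| < ((complex.Re e / n.+1%:R)%:C)%C.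
  by move=> k; apply: dense_approx.
case/fin_all_exists => h hh.
exists (g (CodeSeq.code [seq h k | k <- enum 'I_n])); split; last by exists (CodeSeq.code [seq h k | k <- enum 'I_n]).
apply: He; rewrite /= (rn_lt _ e0); apply: rn_small => // k.
rewrite !ffunE CodeSeq.codeK (nth_map k) ?size_enum_ord // nth_ord_enum.
by have := hh k; rewrite (rn_lt _ e'C).
Qed.

Definition pHilbert : hilbert R :=
  @Hilbert R (NormedModule.clone (CC R) P _) (@pip R H n) (@pip_linl R H n)
    (@pip_sym R H n) (@pip_norm R H n) (@pH_complete R H n) pH_separable.
End Prod3.
Section Bop.
Variable R : realType.
Implicit Types X Y Z : hilbert R.

Lemma rn_sum_le (V : normedModType (CC R)) (I : Type) (s : seq I) (Pr : pred I) (v : I -> V) :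
  rn (\sum_(i <- s | Pr i) v i) <= \sum_(i <- s | Pr i) rn (v i).
Proof.
have h : `|\sum_(i <- s | Pr i) v i| <= \sum_(i <- s | Pr i) `|v i| by apply: ler_norm_sum.
rewrite (eq_bigr (fun i => (rn (v i))%:C%C)) in h; last by move=> i _; rewrite rnE.
by rewrite rnE -rmorph_sum lecR in h.
Qed.

Section Lin.
Variables (X Y : hilbert R) (T : X -> Y).
Hypothesis lin : forall (a : CC R) (x y : X), T (a *: x + y) = a *: T x + T y.
Lemma lin0 : T 0 = 0.
Proof.
have h := lin 1 0 0; rewrite !scale1r addr0 in h.
by apply: (addrI (T 0)); rewrite addr0 -h.
Qed.
Lemma linD x y : T (x + y) = T x + T y.
Proof. by have := lin 1 x y; rewrite !scale1r. Qed.
Lemma linZ a x : T (a *: x) = a *: T x.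
Proof. by have := lin a x 0; rewrite !addr0 lin0 addr0. Qed.
Lemma linN x : T (- x) = - T x.
Proof. by rewrite -scaleN1r linZ scaleN1r. Qed.
Lemma linB x y : T (x - y) = T x - T y.
Proof. by rewrite linD linN. Qed.
Lemma lin_sum (I : Type) (s : seq I) (Pr : pred I) (v : I -> X) :
  T (\sum_(i <- s | Pr i) v i) = \sum_(i <- s | Pr i) T (v i).
Proof.
elim: s => [|a s IH]; first by rewrite !big_nil lin0.
by rewrite !big_cons; case: (Pr a) => //; rewrite linD IH.
Qed.

Lemma bop_of_bound (M : R) : (forall x, rn (T x) <= M * rn x) -> is_bop T.
Proof.
move=> hM; split => // x; apply/cvgrPdist_lt => e e0.
have eR : 0 < complex.Re e by rewrite -ltcR RRe_real // gtr0_real.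
have M1 : 0 < `|M| + 1 by rewrite ltr_pwDr // normr_ge0.
have d0 : (0 : CC R) < ((complex.Re e / (`|M| + 1))%:C)%C by rewrite ltcR divr_gt0.
apply/nbhs_normP; exists ((complex.Re e / (`|M| + 1))%:C)%C => //= t.
rewrite /ball_ /= (rn_lt _ d0) (rn_lt _ e0) /= -linB => ht.
apply: (le_lt_trans (hM _)).
apply: (@le_lt_trans _ _ (`|M| * rn (x - t))).
  by apply: ler_wpM2r; [exact: rn_ge0 | exact: ler_norm].
rewrite ltr_pdivlMr // in ht.
have h0 := rn_ge0 (x - t); have hM0 := normr_ge0 M.
nra.
Qed.
End Lin.

Lemma bound_of_bop (X Y : hilbert R) (T : X -> Y) : is_bop T ->
  exists M : R, 0 < M /\ forall x, rn (T x) <= M * rn x.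
Proof.
move=> [lin ct].
have : T @ (0 : X) --> (0 : Y) by rewrite -(lin0 lin); exact: ct.
move/cvgr0Pnorm_lt => /(_ 1 ltr01) /nbhs_norm0P [e /= e0 He].
have eR : 0 < complex.Re e by rewrite -ltcR RRe_real // gtr0_real.
exists (2 / complex.Re e); split; first by rewrite divr_gt0.
move=> x.
have [->|x0] := eqVneq x 0; first by rewrite (lin0 lin) !rn0 mulr0.
have rx : 0 < rn x by rewrite lt_def rn_ge0 andbT; apply/eqP => /rn_eq0; apply/eqP.
pose c : R := complex.Re e / (2 * rn x).
have c0 : 0 < c by rewrite divr_gt0 // mulr_gt0.
have : rn (T ((c%:C)%C *: x)) < 1.
  rewrite -ltcR -rnE; apply: He.
  rewrite /= (rn_lt _ e0) rnZ normc_real gtr0_norm // /c.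
  have -> : complex.Re e / (2 * rn x) * rn x = complex.Re e / 2.
    by field; rewrite gt_eqF.
  lra.
rewrite (linZ lin) rnZ normc_real gtr0_norm // => h.
have -> : rn (T x) = (c * rn (T x)) * (2 / complex.Re e * rn x).
  by rewrite /c; field; rewrite !gt_eqF.
apply: ler_piMl; last exact: ltW.
by apply: mulr_ge0; [apply: ltW; rewrite divr_gt0 | exact: rn_ge0].
Qed.
End Bop.
Section Bop2.
Variable R : realType.

Lemma bop_sum (X Y : hilbert R) (I : finType) (Pr : pred I) (T : I -> X -> Y) :
  (forall i, is_bop (T i)) -> is_bop (fun x => \sum_(i | Pr i) T i x).
Proof.
move=> hT.
have lin : forall (a : CC R) (x y : X), (fun x => \sum_(i | Pr i) T i x) (a *: x + y) =
   a *: (fun x => \sum_(i | Pr i) T i x) x + (fun x => \sum_(i | Pr i) T i x) y.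
  move=> a x y /=; rewrite scaler_sumr -big_split /=; apply: eq_bigr => i _.
  by case: (hT i) => -> _.
have : forall i, exists M : R, 0 < M /\ forall x, rn (T i x) <= M * rn x.
  by move=> i; apply: bound_of_bop.
case/fin_all_exists => M hM.
apply: (bop_of_bound lin (M := \sum_i M i)) => x.
apply: (le_trans (rn_sum_le _ _ _)).
rewrite mulr_suml big_mkcond /=; apply: ler_sum => i _.
case: (Pr i); first exact: (proj2 (hM i)).
by apply: mulr_ge0; [apply: ltW; exact: (proj1 (hM i)) | exact: rn_ge0].
Qed.

Lemma bop_comp (X Y Z : hilbert R) (S : Y -> Z) (T : X -> Y) :
  is_bop S -> is_bop T -> is_bop (fun x => S (T x)).
Proof.
move=> hS hT.
have lin : forall (a : CC R) (x y : X), (fun x => S (T x)) (a *: x + y) =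
   a *: (fun x => S (T x)) x + (fun x => S (T x)) y.
  by move=> a x y /=; case: hT => -> _; case: hS => -> _.
have [MS [MS0 hMS]] := bound_of_bop hS; have [MT [MT0 hMT]] := bound_of_bop hT.
apply: (bop_of_bound lin (M := MS * MT)) => x /=.
apply: (le_trans (hMS _)); rewrite -mulrA ler_wpM2l //; exact: ltW.
Qed.

Lemma bop_scale (X Y : hilbert R) (a : CC R) (T : X -> Y) :
  is_bop T -> is_bop (fun x => a *: T x).
Proof.
move=> hT.
have lin : forall (b : CC R) (x y : X), (fun x => a *: T x) (b *: x + y) =
   b *: (fun x => a *: T x) x + (fun x => a *: T x) y.
  move=> b x y /=; case: hT => -> _; by rewrite scalerDr !scalerA mulrC.
have [MT [MT0 hMT]] := bound_of_bop hT.
apply: (bop_of_bound lin (M := complex.Re `|a| * MT)) => x /=.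
rewrite rnZ -mulrA; apply: ler_wpM2l; last exact: hMT.
by rewrite -ler0c RRe_real.
Qed.

Lemma bop_id (X : hilbert R) : is_bop (fun x : X => x).
Proof.
have lin : forall (b : CC R) (x y : X), (fun x => x) (b *: x + y) =
   b *: (fun x => x) x + (fun x => x) y by [].
by apply: (bop_of_bound lin (M := 1)) => x; rewrite mul1r.
Qed.

Lemma bop_zop (N : nat) (X Y : hilbert R) (z : 'rV[CC R]_N) (T : 'I_N -> X -> Y) :
  (forall k, is_bop (T k)) -> is_bop (zop z T).
Proof.
move=> hT; rewrite /zop.
have h := (@bop_sum X Y _ xpredT (fun k x => z ord0 k *: T k x) (fun k => bop_scale _ (hT k))).
exact: h.
Qed.

Lemma bop_iter (X : hilbert R) (f : X -> X) n : is_bop f -> is_bop (iter n f).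
Proof.
move=> hf; elim: n => [|n IH] /=; first exact: bop_id.
exact: (bop_comp hf IH).
Qed.
End Bop2.
Section Fact.
Variables (R : realType) (N : nat) (U : hilbert R).

Definition prj (Y : hilbert R) (k : 'I_N) (x : pHilbert Y N) : Y := (x : pH Y N) k.
Definition inj (Y : hilbert R) (k : 'I_N) (v : Y) : pHilbert Y N :=
  [ffun j : 'I_N => if j == k then v else 0] : pH Y N.

Lemma bop_prj (Y : hilbert R) k : is_bop (@prj Y k).
Proof.
have lin : forall (a : CC R) (x y : pHilbert Y N), prj k (a *: x + y) = a *: prj k x + prj k y.
  by move=> a x y; rewrite /prj !ffunE.
apply: (bop_of_bound lin (M := 1)) => x; rewrite mul1r; exact: rn_proj.
Qed.

Lemma bop_inj (Y : hilbert R) k : is_bop (@inj Y k).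
Proof.
have lin : forall (a : CC R) (x y : Y), inj k (a *: x + y) = a *: inj k x + inj k y.
  move=> a x y; apply/ffunP => j; rewrite !ffunE.
  by case: (j == k); rewrite ?scaler0 ?addr0.
apply: (bop_of_bound lin (M := 1)) => x; rewrite mul1r.
apply: (le_trans (rn_sum _)).
rewrite (bigD1 k) //= big1 ?addr0; first by rewrite ffunE eqxx.
by move=> j /negPf jk; rewrite ffunE jk rn0.
Qed.

Lemma fact_gen m : forall (Y : hilbert R) (I : finType) (s : I -> 'I_m.+1 -> 'I_N)
  (d : I -> U -> Y), (forall i, is_bop (d i)) ->
  exists F, @factorization R N U Y m.+1 F /\
    forall z u, F z u = \sum_i (\prod_j z ord0 (s i j)) *: d i u.
Proof.
elim: m => [|m IH] Y I s d hd.
  pose L k u := \sum_(i | s i ord0 == k) d i u.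
  have hL : forall k, is_bop (L k) by move=> k; exact: bop_sum.
  exists (fun z => zop z L); split; first exact: Defs.fact1.
  move=> z u; rewrite /zop /L.
  under eq_bigr => k _ do rewrite scaler_sumr big_mkcond /=.
  rewrite exchange_big /=; apply: eq_bigr => i _.
  rewrite big_ord1 -big_mkcond /= (eq_bigl (fun k => k == s i ord0)) => [|k]; last by rewrite eq_sym.
  by rewrite big_pred1_eq.
pose s' i (j : 'I_m.+1) := s i (lift ord0 j).
pose d' i u := inj (s i ord0) (d i u).
have hd' : forall i, is_bop (d' i) by move=> i; exact: (bop_comp (@bop_inj Y (s i ord0)) (hd i)).
have [F' [hF' eF']] := IH (pHilbert Y N) I s' d' hd'.
exists (fun z u => zop z (@prj Y) (F' z u)); split; first by apply: Defs.factS hF' => k; exact: bop_prj.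
move=> z u.
have Fk : forall k, (F' z u : pH Y N) k =
    \sum_i (\prod_j z ord0 (s' i j)) *: (if k == s i ord0 then d i u else 0).
  by move=> k; rewrite eF' sum_ffunE; apply: eq_bigr => i _; rewrite !ffunE.
rewrite /zop /prj.
under eq_bigr => k _ do rewrite Fk scaler_sumr.
rewrite exchange_big /=; apply: eq_bigr => i _.
rewrite (bigD1 (s i ord0)) //= eqxx [X in _ + X]big1; last first.
  by move=> k /negPf ->; rewrite !scaler0.
by rewrite addr0 scalerA [X in _ = X *: _]big_ord_recl.
Qed.
End Fact.
Section Canon.
Variables (R : realType) (N m : nat) (k0 : 'I_N).
Definition canonS (a : {ffun 'I_N -> 'I_m.+1}) : seq 'I_N :=
  [seq x | k <- enum 'I_N, x <- nseq (a k) k].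

Lemma canon_prod (a : {ffun 'I_N -> 'I_m.+1}) (z : 'rV[CC R]_N) :
  (\sum_k (a k : nat))%N = m ->
  \prod_(j < m) z ord0 (nth k0 (canonS a) j) = \prod_k z ord0 k ^+ a k.
Proof.
move=> hs.
have hsize : size (canonS a) = m.
  rewrite -[RHS]hs /canonS size_allpairs_dep sumnE big_map big_enum /=.
  by apply: eq_big => // i _; rewrite size_nseq.
transitivity (\prod_(x <- canonS a) z ord0 x).
  by rewrite (big_nth k0) hsize big_mkord.
rewrite /canonS big_allpairs_dep big_enum /=; apply: eq_big => // k _.
rewrite big_nseq; elim: (nat_of_ord (a k)) => [|n IH] //=.
by rewrite IH exprS.
Qed.
End Canon.
Lemma bop_zero (R : realType) (X Y : hilbert R) : is_bop (fun _ : X => (0 : Y)).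
Proof.
have lin : forall (b : CC R) (x y : X), (fun _ : X => (0 : Y)) (b *: x + y) =
   b *: (fun _ : X => (0 : Y)) x + (fun _ : X => (0 : Y)) y by move=> b x y; rewrite scaler0 addr0.
by apply: (bop_of_bound lin (M := 0)) => x; rewrite rn0 mul0r.
Qed.

Lemma part1 (R : realType) (N m : nat) (U Y : hilbert R)
  (c : {ffun 'I_N -> 'I_m.+1} -> U -> Y) :
  (1 <= m)%N ->
  (forall a, is_bop (c a)) ->
  (exists (z : 'rV[CC R]_N) (u : U), hpoly c z u != 0) ->
  (exists F : 'rV[CC R]_N -> U -> Y,
      @factorization R N U Y m F /\ forall z u, F z u = hpoly c z u).
Proof.
case: m c => [//|m'] c _ hc [z0 [u0 hnz]].
have N0 : (0 < N)%N.
  rewrite lt0n; apply/negP => /eqP N0; subst N.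
  move: hnz; rewrite /hpoly big_pred0 ?eqxx // => a.
  by rewrite big_ord0.
pose k0 : 'I_N := Ordinal N0.
pose d (a : {ffun 'I_N -> 'I_m'.+2}) := if (\sum_k (a k : nat) == m'.+1)%N then c a else (fun _ => 0).
have hd : forall a, is_bop (d a).
  by move=> a; rewrite /d; case: ifP => _; [exact: hc | exact: bop_zero].
have [F [hF eF]] := fact_gen (fun a (j : 'I_m'.+1) => nth k0 (canonS a) j) hd.
exists F; split => // z u.
rewrite eF /hpoly [RHS]big_mkcond /=; apply: eq_bigr => a _.
rewrite /d; case: ifP => h; last by rewrite scaler0.
by rewrite canon_prod //; apply/eqP.
Qed.
Section Part2a.
Variable R : realType.

Lemma zop_scale (N : nat) (X Y : hilbert R) (t : CC R) (z : 'rV[CC R]_N) (T : 'I_N -> X -> Y) x :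
  zop (t *: z) T x = t *: zop z T x.
Proof.
rewrite /zop scaler_sumr; apply: eq_bigr => k _; by rewrite mxE scalerA.
Qed.

Lemma hpoly_hom (N m : nat) (U Y : hilbert R) (c : {ffun 'I_N -> 'I_m.+1} -> U -> Y) (t : CC R) z u :
  hpoly c (t *: z) u = t ^+ m *: hpoly c z u.
Proof.
rewrite /hpoly scaler_sumr; apply: eq_bigr => a /eqP ha.
rewrite scalerA; congr (_ *: _).
under eq_bigr => k _ do rewrite mxE exprMn.
by rewrite big_split /= prodrXr ha.
Qed.

Lemma rnZr (V : normedModType (CC R)) (r : R) (v : V) : 0 <= r -> rn ((r%:C)%C *: v) = r * rn v.
Proof. by move=> r0; rewrite rnZ normc_real ger0_norm. Qed.

Lemma le_small (a C d : R) : 0 < d -> 0 <= C -> (forall r, 0 < r -> r < d -> a <= r * C) -> a <= 0.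
Proof.
move=> d0 C0 h; rewrite leNgt; apply/negP => a0.
have dC : 0 <= d * C by apply: mulr_ge0 => //; exact: ltW.
have D0 : 0 < a + d * C by lra.
pose r := d * a / (2 * (a + d * C)).
have r0 : 0 < r by rewrite /r divr_gt0 ?mulr_gt0.
have rd : r < d.
  rewrite /r ltr_pdivrMr ?mulr_gt0 //; nra.
have := h r r0 rd; rewrite /r.
rewrite mulrAC ler_pdivlMr ?mulr_gt0 //; nra.
Qed.

Lemma vanish (V : normedModType (CC R)) p : forall (v : nat -> V) (K d : R), 0 < d ->
  (forall r : R, 0 < r -> r < d -> rn (\sum_(j < p) ((r%:C)%C ^+ j) *: v j) <= K * r ^+ p) ->
  forall j, (j < p)%N -> v j = 0.
Proof.
elim: p => [|p IH] v K d d0 hb j hj //.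
pose S' (r : R) := \sum_(j < p) ((r%:C)%C ^+ j) *: v j.+1.
have split : forall r : R, \sum_(j < p.+1) ((r%:C)%C ^+ j) *: v j = v 0%N + (r%:C)%C *: S' r.
  move=> r; rewrite big_ord_recl expr0 scale1r /S' scaler_sumr; congr (_ + _).
  by apply: eq_bigr => i _; rewrite lift0 scalerA exprS.
pose d1 := Num.min d 1.
have d10 : 0 < d1 by rewrite lt_min d0 ltr01.
have v00 : v 0%N = 0.
  apply: rn_eq0; apply/eqP; rewrite eq_le rn_ge0 andbT.
  apply: (le_small (d := d1) (C := `|K| + \sum_(j < p) rn (v j.+1))) => //.
    by rewrite addr_ge0 // sumr_ge0 // => i _; exact: rn_ge0.
  move=> r r0 rd1.
  have rd : r < d by move: rd1; rewrite lt_min => /andP[].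
  have r1 : r < 1 by move: rd1; rewrite lt_min => /andP[].
  have e1 : v 0%N = \sum_(j < p.+1) ((r%:C)%C ^+ j) *: v j - (r%:C)%C *: S' r.
    by rewrite split addrK.
  rewrite e1; apply: (le_trans (rnD _ _)); rewrite rnN (rnZr _ (ltW r0)) mulrDr.
  apply: lerD.
    apply: (le_trans (hb r r0 rd)).
    rewrite exprS mulrCA; apply: ler_wpM2l; first exact: ltW.
    apply: (le_trans (ler_norm _)).
    rewrite normrM (ger0_norm (exprn_ge0 _ (ltW r0))); apply: ler_piMr; first exact: normr_ge0.
    exact: exprn_ile1 (ltW r0) (ltW r1).
  apply: ler_wpM2l; first exact: ltW.
  rewrite /S'; apply: (le_trans (rn_sum_le _ _ _)); apply: ler_sum => i _.
  have -> : (r%:C)%C ^+ i = ((r ^+ i)%:C)%C by rewrite rmorphXn.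
  rewrite (rnZr _ (exprn_ge0 _ (ltW r0))).
  rewrite -[X in _ <= X]mul1r; apply: ler_wpM2r; first exact: rn_ge0.
  exact: exprn_ile1 (ltW r0) (ltW r1).
case: j hj => [//|j] hj.
apply: (IH (fun j => v j.+1) K d d0) => // r r0 rd.
have := hb r r0 rd; rewrite split v00 add0r (rnZr _ (ltW r0)) exprS mulrCA.
by rewrite ler_pM2l.
Qed.
End Part2a.
Section Part2b.
Variable R : realType.

Lemma expand (X : hilbert R) (T : X -> X) (hT : is_bop T) (t : CC R) (b x : X) :
  x = t *: b + t *: T x -> forall K,
  x = \sum_(n < K) t ^+ n.+1 *: iter n T b + t ^+ K *: iter K T x.
Proof.
move=> hx; elim => [|K IH]; first by rewrite big_ord0 add0r expr0 scale1r.
have lK := (bop_iter K hT).1.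
rewrite big_ord_recr /= -addrA {1}IH; congr (_ + _).
rewrite {1}hx (linD lK) !(linZ lK) -iterSr scalerDr !scalerA -!exprSr //.
Qed.

Lemma part2 (N m : nat) (U Y : hilbert R)
  (c : {ffun 'I_N -> 'I_m.+1} -> U -> Y) :
  ((1 < m)%N ->
   forall (X : hilbert R) (A : 'I_N -> X -> X) (B : 'I_N -> U -> X)
          (C : 'I_N -> X -> Y) (D : 'I_N -> U -> Y),
     (forall k, is_bop (A k)) -> (forall k, is_bop (B k)) ->
     (forall k, is_bop (C k)) -> (forall k, is_bop (D k)) ->
     transfer_eq_near0 A B C D (hpoly c) ->
     forall z u, hpoly c z u = zop z C (iter (m - 2) (zop z A) (zop z B u))).
Proof.
case: m c => [|[|m]] c //= _ X A B C D hA hB hC hD htr z u.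
rewrite !subSS subn0.
set T := zop z A; set b := zop z B u; set Cz := zop z C; set Dz := zop z D.
set th := hpoly c z u.
have hT : is_bop T by exact: bop_zop.
have hCz : is_bop Cz by exact: bop_zop.
have hK : is_bop (fun x => Cz (iter m.+1 T x)) by exact: bop_comp hCz (bop_iter _ hT).
have [MT [MT0 hMT]] := bound_of_bop hT.
have [MK [MK0 hMK]] := bound_of_bop hK.
move/nbhs_norm0P: htr => [e /= e0 He].
have eR : 0 < complex.Re e by rewrite -ltcR RRe_real // gtr0_real.
pose dz := rn z.
have dz0 : 0 <= dz by exact: rn_ge0.
pose dl := Num.min (complex.Re e / (dz + 1)) (1 / (2 * MT)).
have dl0 : 0 < dl by rewrite lt_min !divr_gt0 // ?mulr_gt0 // ltr_wpDl.
pose v (j : nat) : Y := match j with 0 => 0 | 1 => Dz u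
  | n.+2 => Cz (iter n T b) - (if n == m then th else 0) end.
have := @vanish R Y m.+3 v (2 * MK * rn b) dl dl0.
move=> /(_ _ m.+2 (ltnSn _)) /=; rewrite eqxx => h; apply/eqP; rewrite eq_sym -subr_eq0; apply/eqP; apply: h.
move=> r r0 rdl.
have rd1 : r * (dz + 1) < complex.Re e.
  by move: rdl; rewrite lt_min => /andP[+ _]; rewrite ltr_pdivlMr // ltr_wpDl.
have rd2 : r * MT <= 1 / 2.
  move: rdl; rewrite lt_min => /andP[_ +]; rewrite ltr_pdivlMr ?mulr_gt0 // => h.
  nra.
pose w := (r%:C)%C *: z.
have [bij himp] : bijective (fun x : X => x - zop w A x) /\
     forall (u : U) (x : X), x - zop w A x = zop w B u ->
       hpoly c w u = zop w D u + zop w C x.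
  apply: He; rewrite /= (rn_lt _ e0) /w (rnZr _ (ltW r0)).
  apply: le_lt_trans rd1; rewrite ler_wpM2l ?ltW //; lra.
case: bij => g _ gK.
set x := g (zop w B u).
have hx : x - zop w A x = zop w B u := gK _.
have he := himp u x hx.
rewrite /w !zop_scale hpoly_hom -/T -/b -/Cz -/Dz -/th in hx he.
have hx' : x = (r%:C)%C *: b + (r%:C)%C *: T x by rewrite -hx subrK.
have ex := expand hT hx' m.+1.
have bx : rn x <= 2 * r * rn b.
  have h1 := rnD ((r%:C)%C *: b) ((r%:C)%C *: T x).
  rewrite -hx' !(rnZr _ (ltW r0)) in h1.
  have h2 := hMT x; have h3 := rn_ge0 x; have h4 := rn_ge0 b.
  nra.
have lC := hCz.1.
have eCx : Cz x = \sum_(n < m.+1) (r%:C)%C ^+ n.+1 *: Cz (iter n T b)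
     + (r%:C)%C ^+ m.+1 *: Cz (iter m.+1 T x).
  rewrite {1}ex (linD lC) (lin_sum lC) (linZ lC); congr (_ + _).
  by apply: eq_bigr => n _; rewrite (linZ lC).
have E2 : (r%:C)%C ^+ m.+2 *: th = ((r%:C)%C *: Dz u
    + \sum_(n < m.+1) (r%:C)%C ^+ n.+2 *: Cz (iter n T b))
    + (r%:C)%C ^+ m.+2 *: Cz (iter m.+1 T x).
  rewrite he eCx scalerDr scaler_sumr addrA !scalerA -exprS; congr (_ + _ + _).
  by rewrite scaler_sumr; apply: eq_bigr => n _; rewrite scalerA -exprS.
have E1 : \sum_(j < m.+3) (r%:C)%C ^+ j *: v j = ((r%:C)%C *: Dz u
    + \sum_(n < m.+1) (r%:C)%C ^+ n.+2 *: Cz (iter n T b)) - (r%:C)%C ^+ m.+2 *: th.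
  rewrite big_ord_recl big_ord_recl /= scaler0 add0r expr1 -addrA; congr (_ + _).
  have bb : forall i, bump 0 (bump 0 i) = i.+2 by move=> i; rewrite /bump !leq0n.
  under eq_bigr => i _ do rewrite bb add0n scalerBr.
  rewrite sumrB; congr (_ - _).
  rewrite big_ord_recr /= eqxx big1 ?add0r // => i _.
  by rewrite ltn_eqF ?scaler0.
rewrite E1 E2 opprD addrA subrr add0r rnN.
have -> : (r%:C)%C ^+ m.+2 = ((r ^+ m.+2)%:C)%C by rewrite rmorphXn.
rewrite (rnZr _ (exprn_ge0 _ (ltW r0))).
have p0 := exprn_ge0 m.+2 (ltW r0).
apply: (le_trans (ler_wpM2l p0 (hMK _))).
apply: (le_trans (ler_wpM2l p0 (ler_wpM2l (ltW MK0) bx))).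
rewrite [r ^+ m.+3]exprS le_eqVlt; apply/orP; left; apply/eqP; ring.
Qed.
End Part2b.

Theorem mainTheorem2 (R : realType) (N m : nat) (U Y : hilbert R)
  (c : {ffun 'I_N -> 'I_m.+1} -> U -> Y) :
  (1 <= m)%N ->
  (forall a, is_bop (c a)) ->
  (exists (z : 'rV[CC R]_N) (u : U), hpoly c z u != 0) ->
  (exists F : 'rV[CC R]_N -> U -> Y,
      @factorization R N U Y m F /\ forall z u, F z u = hpoly c z u) /\
  ((1 < m)%N ->
   forall (X : hilbert R) (A : 'I_N -> X -> X) (B : 'I_N -> U -> X)
          (C : 'I_N -> X -> Y) (D : 'I_N -> U -> Y),
     (forall k, is_bop (A k)) -> (forall k, is_bop (B k)) ->
     (forall k, is_bop (C k)) -> (forall k, is_bop (D k)) ->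
     transfer_eq_near0 A B C D (hpoly c) ->
     forall z u, hpoly c z u = zop z C (iter (m - 2) (zop z A) (zop z B u))).
Proof.
move=> m1 hc hnz; split; first exact: part1.
exact: part2.
Qed.
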